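(* Let $G$ be a connected graph with vertex set $\{u_1,\dots,u_m\}$, $m\ge2$, and $\kappa(G)=\delta(G)>0$, and let $n\ge3$. Let $S\subseteq V(G\times K_n)$ with $|S|=(n-1)\delta(G)$ such that $S_i\subseteq S$ for some $i\in\{1,\dots,m\}$. Then $G\times K_n-S$ is connected.
   Context: The Kronecker product $G_1\times G_2$ has vertex set $V(G_1)\times V(G_2)$, with $(u_1,v_1)(u_2,v_2)$ an edge iff $u_1u_2\in E(G_1)$ and $v_1v_2\in E(G_2)$. $K_n$ is the complete graph with $V(K_n)=\{v_1,\dots,v_n\}$, and $S_i=\{u_i\}\times V(K_n)$ for $i=1,\dots,m$. $\kappa$ denotes vertex connectivity and $\delta$ minimum degree. *)

(* Defs.v *)
(* Simple graphs are symmetric irreflexive relations on a finType. *)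
From mathcomp Require Import all_boot.
Set Implicit Arguments. Unset Strict Implicit. Unset Printing Implicit Defensive.

Definition induced (T : finType) (e : rel T) (A : {set T}) : rel T :=
  [rel x y | [&& x \in A, y \in A & e x y]].

Definition connected_on (T : finType) (e : rel T) (A : {set T}) : bool :=
  [forall x in A, forall y in A, connect (induced e A) x y].

Definition connected_graph (T : finType) (e : rel T) : bool :=
  connected_on e [set: T].

Definition degree (T : finType) (e : rel T) (x : T) : nat := #|[set y | e x y]|.

(* minimum degree delta(G); the seed #|T| is never below any degree *)
Definition min_degree (T : finType) (e : rel T) : nat :=
  \big[minn/#|T|]_(x : T) degree e x.

Definition separating (T : finType) (e : rel T) (S : {set T}) : bool :=
  ~~ connected_on e (~: S) || (#|~: S| <= 1).

(* vertex connectivity kappa(G): minimum size of such a set (setT always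
   qualifies, with size #|T|, so the seed is harmless) *)
Definition kappa (T : finType) (e : rel T) : nat :=
  \big[minn/#|T|]_(S : {set T} | separating e S) #|S|.

Definition complete_rel (n : nat) : rel 'I_n := fun i j => i != j.

Definition kron_Kn (T : finType) (e : rel T) (n : nat) : rel (T * 'I_n)%type :=
  fun p q => e p.1 q.1 && complete_rel p.2 q.2.

(* Main.v *)
Require Import Defs.
From Stdlib Require Import Lia Classical.
From mathcomp Require Import all_boot.

Ltac tolia := repeat match goal with
 | H : is_true (_ <= _) |- _ => revert H
 | H : is_true (_ == _ :> nat) |- _ => revert H
 | H : @eq nat _ _ |- _ => revert H end;
 rewrite -?plusE -?multE -?minusE;
 repeat match goal with
 | |- is_true (_ <= _) -> _ => move/leP => ?
 | |- is_true (_ == _ :> nat) -> _ => move/eqP => ?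
 | |- _ -> _ => intro end;
 try apply/leP; try apply/eqP.

Lemma bigmin_seq (I : eqType) (r : seq I) (F : I -> nat) x j :
  j \in r -> \big[minn/x]_(i <- r) F i <= F j.
Proof.
elim: r => //= a r IH; rewrite big_cons inE; case/orP => [/eqP->|/IH h].
  exact: geq_minl.
exact: leq_trans (geq_minr _ _) h.
Qed.

Lemma bigmin_le (I : finType) (P : pred I) (F : I -> nat) x j :
  P j -> \big[minn/x]_(i | P i) F i <= F j.
Proof.
move=> Pj; rewrite -big_filter; apply: bigmin_seq.
by rewrite mem_filter Pj mem_index_enum.
Qed.

Lemma connect_pred (T : finType) (r : rel T) (P : T -> Prop) x y :
  (forall a b, r a b -> P a -> P b) -> connect r x y -> P x -> P y.
Proof.
move=> H /connectP [p]; elim: p x => [|z p IH] x /=; first by move=> _ ->.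
case/andP=> rxz pp ey Px; apply: (IH z pp ey); exact: H rxz Px.
Qed.

Definition layer (T : finType) (n : nat) (X : {set (T * 'I_n)%type}) (v : T) : {set 'I_n} :=
  [set k | (v, k) \in X].
Arguments layer {T n} X v.

Lemma in_layer (T : finType) (n : nat) (X : {set (T * 'I_n)%type}) v k :
  (k \in layer X v) = ((v, k) \in X).
Proof. by rewrite inE. Qed.

Lemma final_arith s0 sY y z p q d n : s0 = (n-1)*d -> (n-1)*y+1 <= sY ->
  s0 = sY + z*(n-2) -> p+q <= z -> d - y <= p -> d - y <= q -> y < d -> 3 <= n -> False.
Proof.
move=> h1 h2 h3 h4 h5 h6 h7 h8.
have [k ek] : exists k, d = y + k.+1 by exists (d - y.+1); rewrite addnS -addSn subnKC.
have [m em] : exists m, n = m.+3 by exists (n - 3); rewrite -[LHS](subnK h8) addn3.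
subst d n; rewrite addKn in h5 h6.
have e1 : m.+3 - 1 = m.+2 by rewrite subn1.
have e2 : m.+3 - 2 = m.+1 by rewrite subn2.
rewrite e1 in h1 h2; rewrite e2 in h3.
tolia. nia.
Qed.

Theorem mainTheorem5 (T : finType) (e : rel T) (n : nat) (S : {set (T * 'I_n)%type}) :
  symmetric e -> irreflexive e ->
  2 <= #|T| ->
  connected_graph e ->
  kappa e = min_degree e -> 0 < min_degree e ->
  3 <= n ->
  #|S| = (n - 1) * min_degree e ->
  (exists u : T, [set (u, j) | j : 'I_n] \subset S) ->
  connected_on (@kron_Kn T e n) (~: S).
Proof.
move=> esym eirr hT conG hk hd0 hn hS [u hu].
set d := min_degree e in hk hd0 hS *.
set R := ~: S.
set E := induced (@kron_Kn T e n) R.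
pose tS v := #|layer S v|.
have AtS v : #|layer R v| + tS v = n.
  rewrite /tS (_ : layer S v = ~: layer R v) ?cardsC ?card_ord //.
  by apply/setP => k; rewrite in_setC !in_layer in_setC negbK.
have sumS : #|S| = \sum_v tS v.
  rewrite /tS; under eq_bigr => v _ do rewrite -sum1_card big_mkcond /=.
  rewrite pair_big /= -sum1_card big_mkcond /=; apply: eq_bigr => -[a b] _.
  by rewrite in_layer.
have tSu : tS u = n.
  rewrite /tS (_ : layer S u = setT) ?cardsT ?card_ord //.
  apply/setP=> k; rewrite in_layer inE; apply: (subsetP hu); apply/imsetP; by exists k.
clearbody R.
pose Y := [set v | #|layer R v| <= 1].
pose Z := ~: Y.
have uY : u \in Y.
  by rewrite inE; have := AtS u; rewrite tSu; tolia; lia.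
have tSY v : v \in Y -> n - 1 <= tS v.
  by rewrite inE => vY; rewrite -(AtS v) leq_subLR leq_add2r.
have sumY : (n - 1) * #|Y| + 1 <= \sum_(v in Y) tS v.
  have: \sum_(v in Y) ((n - 1) + (v == u)) <= \sum_(v in Y) tS v.
    apply: leq_sum => v vY.
    case: eqP => [->|_]; last by rewrite addn0 tSY.
    by rewrite /= tSu subnK // (leq_trans _ hn).
  rewrite big_split sum_nat_const /= (bigD1 u) //= eqxx.
  move=> h; apply: leq_trans h; rewrite mulnC leq_add2l; exact: leq_addr.
have hY : #|Y| < d.
  have : (n - 1) * #|Y| + 1 <= (n - 1) * d.
    by rewrite -hS sumS (bigID (mem Y)) /=; apply: leq_trans sumY (leq_addr _ _).
  tolia; nia.
have degd v : d <= #|[set w | e v w]|.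
  exact: (@bigmin_le T xpredT (fun x => degree e x) #|T| v).
have inY v : (v \in Y) = (#|layer R v| <= 1) by rewrite inE.
have inZ v : (v \in Z) = ~~ (v \in Y) by rewrite in_setC.
clearbody Y Z.
have [ZcE Zgt1] : connected_on e Z /\ 1 < #|Z|.
  have : ~~ separating e Y.
    apply/negP => sepY.
    have : kappa e <= #|Y| := @bigmin_le _ (separating e) (fun X => #|X|) #|T| Y sepY.
    by rewrite hk leqNgt hY.
  rewrite /separating negb_or negbK -ltnNge => /andP[h1 h2].
  have -> : Z = ~: Y by apply/setP => v; rewrite inZ in_setC.
  by split.
have NZ v : d - #|Y| <= #|[set w | e v w] :&: Z|.
  rewrite leq_subLR; apply: leq_trans (degd v) _.
  rewrite -(cardsID Z [set w | e v w]) addnC leq_add2r.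
  apply: subset_leq_card; apply/subsetP => w; rewrite in_setD inZ negbK.
  by case/andP.
have ZN v : exists2 w, w \in Z & e v w.
  have : 0 < #|[set w | e v w] :&: Z|.
    by apply: leq_trans (NZ v); rewrite subn_gt0.
  case/card_gt0P => w /setIP [ew wZ]; exists w => //; by rewrite inE in ew.
have LZ w : w \in Z -> 1 < #|layer R w| by rewrite inZ inY -ltnNge.
have Esym : symmetric E.
  move=> x y; rewrite /E /induced /kron_Kn /complete_rel /= esym eq_sym.
  by rewrite andbCA.
have csym : connect_sym E := sym_connect_sym Esym.
have edge v w i j : (v, i) \in R -> (w, j) \in R -> e v w -> i != j ->
    connect E (v, i) (w, j).
  move=> h1 h2 h3 h4; apply: connect1.
  by rewrite /E /induced /kron_Kn /complete_rel /= h1 h2 h3 h4.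
have prop v w b : e v w -> 1 < #|layer R w| ->
    (forall j, (w, j) \in R -> connect E (w, j) b) ->
    forall i, (v, i) \in R -> connect E (v, i) b.
  move=> evw Lw H i vi.
  have : 0 < #|layer R w :\ i|.
    move: Lw; rewrite (cardsD1 i); case: (_ \in _) => /=.
      by rewrite add1n ltnS.
    by rewrite add0n => /ltnW.
  case/card_gt0P => j; rewrite in_setD1 in_layer => /andP[ji wj].
  apply: connect_trans (H j wj); apply: edge => //; by rewrite eq_sym.
pose IC v := forall a b, (v, a) \in R -> (v, b) \in R -> connect E (v, a) (v, b).
have hubC v y : (forall x, (v, x) \in R -> connect E (v, x) y) -> IC v.
  move=> H a b va vb; apply: connect_trans (H a va) _; rewrite csym; exact: H.
have ZconP (P : T -> Prop) w0 v : w0 \in Z -> v \in Z -> P w0 ->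
    (forall a b, a \in Z -> b \in Z -> e a b -> P a -> P b) -> P v.
  move=> w0Z vZ Pw0 H.
  move/forall_inP: ZcE => /(_ w0 w0Z) /forall_inP /(_ v vZ) cw.
  apply: (@connect_pred _ _ P w0 v _ cw Pw0) => a b /= /and3P [aZ bZ eab]; exact: H.
have [[w0 w0Z icw0] | noIC] :
    (exists2 w0, w0 \in Z & IC w0) \/ (forall v, v \in Z -> ~ IC v).
  case: (classic (exists2 w0, w0 \in Z & IC w0)) => h; first by left.
  by right => v vZ icv; apply: h; exists v.
  have : 0 < #|layer R w0| by apply: ltnW; exact: LZ.
  case/card_gt0P => k0; rewrite in_layer => w0k0.
  have allZ v : v \in Z -> forall i, (v, i) \in R -> connect E (v, i) (w0, k0).
    move=> vZ; apply: (ZconP (fun v => forall i, (v, i) \in R -> connect E (v, i) (w0, k0)) w0 v w0Z vZ).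
      by move=> i hi; exact: icw0.
    move=> a b aZ bZ eab Pa; apply: (prop b a) => //; first by rewrite esym.
    exact: LZ.
  have allR x : x \in R -> connect E x (w0, k0).
    case: x => v i vi; case: (boolP (v \in Z)) => [vZ|vY]; first exact: allZ.
    have [w wZ evw] := ZN v; apply: (prop v w) => //; first exact: LZ.
    exact: allZ.
  apply/forall_inP => x xR; apply/forall_inP => y yR.
  apply: connect_trans (allR x xR) _; rewrite csym; exact: allR.
exfalso.
have L2 v : v \in Z -> #|layer R v| = 2.
  move=> vZ; apply/eqP; rewrite eqn_leq LZ // andbT leqNgt; apply/negP => L3.
  apply: (noIC v vZ).
  have [w wZ evw] := ZN v.
  have /card_gt1P [c [d' [wc wd cd]]] := LZ w wZ.
  rewrite in_layer in wc; rewrite in_layer in wd.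
  have : 0 < #|layer R v :\: [set c; d']|.
    rewrite cardsD subn_gt0; apply: leq_trans L3.
    apply: leq_ltn_trans (subset_leq_card (subsetIr _ _)) _.
    by rewrite cards2 cd.
  case/card_gt0P => l; rewrite in_setD in_layer !inE negb_or.
  case/andP=> /andP[lc ld] vl.
  have cdc : connect E (w, d') (w, c).
    have e1 : connect E (w, d') (v, l).
      apply: edge => //; try by rewrite esym.
      by rewrite eq_sym.
    exact: connect_trans e1 (edge v w l c vl wc evw lc).
  apply: (hubC v (w, c)) => x vx.
  case: (eqVneq x c) vx => [->|xc] vx; last exact: edge.
  apply: connect_trans cdc; apply: edge => //; by rewrite eq_sym.
have Leq v w : v \in Z -> w \in Z -> e v w -> layer R w = layer R v.
  move=> vZ wZ evw; apply/eqP; rewrite eqEcard (L2 v vZ) (L2 w wZ) leqnn andbT.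
  apply/subsetP => k; rewrite in_layer => wk; apply/negPn/negP => vk.
  apply: (noIC v vZ); apply: (hubC v (w, k)) => x vx; apply: edge => //.
  by apply/eqP => xk; move: vk; rewrite -xk in_layer vx.
have /card_gt0P [w0 w0Z] : 0 < #|Z| by apply: ltnW.
have allA v : v \in Z -> layer R v = layer R w0.
  move=> vZ; apply: (ZconP (fun v => layer R v = layer R w0) w0 v w0Z vZ) => //.
  by move=> a b aZ bZ eab <-; apply: Leq.
move/eqP: (L2 w0 w0Z) => /cards2P [i [j [ij Aw0]]].
have Ri v : v \in Z -> (v, i) \in R by move=> vZ; rewrite -in_layer allA // Aw0 !inE eqxx.
have Rj v : v \in Z -> (v, j) \in R.
  by move=> vZ; rewrite -in_layer allA // Aw0 !inE eqxx orbT.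
pose PP := [set v | (v \in Z) && connect E (v, i) (w0, i)].
pose QQ := [set v | (v \in Z) && connect E (v, j) (w0, i)].
have PQ : PP :&: QQ = set0.
  apply/setP => v; rewrite in_setI !in_set ?in_set0.
  apply/negP => /andP [/andP [vZ ci] /andP [_ cj]].
  apply: (noIC v vZ); apply: (hubC v (w0, i)) => x vx.
  have : x \in layer R v by rewrite in_layer.
  by rewrite allA // Aw0 !inE => /orP [/eqP -> | /eqP ->].
have NQ : [set w | e w0 w] :&: Z \subset QQ.
  apply/subsetP => w /setIP [ew wZ]; rewrite in_set in ew.
  rewrite in_set wZ /=; apply: edge; rewrite ?Rj ?Ri //; try by rewrite esym.
  by rewrite eq_sym.
have hQ : d - #|Y| <= #|QQ| := leq_trans (NZ w0) (subset_leq_card NQ).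
have /card_gt0P [q] : 0 < #|QQ| by apply: leq_trans hQ; rewrite subn_gt0.
rewrite in_set => /andP [qZ cq].
have NP : [set w | e q w] :&: Z \subset PP.
  apply/subsetP => w /setIP [ew wZ]; rewrite in_set in ew.
  rewrite in_set wZ /=; apply: connect_trans cq.
  apply: edge; rewrite ?Rj ?Ri //; by rewrite esym.
have hP : d - #|Y| <= #|PP| := leq_trans (NZ q) (subset_leq_card NP).
have hPQ : #|PP| + #|QQ| <= #|Z|.
  have := cardsU PP QQ; rewrite PQ cards0 subn0 => <-.
  apply: subset_leq_card; apply/subsetP => v; rewrite in_setU !in_set.
  by case/orP => /andP [].
have sumZ : \sum_(v in Z) tS v = #|Z| * (n - 2).
  rewrite -sum_nat_const; apply: eq_bigr => v vZ.
  by rewrite -(AtS v) (L2 v vZ) addKn.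
have split : #|S| = \sum_(v in Y) tS v + #|Z| * (n - 2).
  rewrite sumS (bigID (mem Y)) /= -sumZ; congr (_ + _).
  by apply: eq_bigl => v; rewrite inZ.
exact: (@final_arith _ _ _ _ _ _ _ _ hS sumY split hPQ hP hQ hY hn).
Qed.
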